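(* Let $D$ be a strongly connected digraph with girth $g$ (having at least one cycle), $T$ a DFS tree of $D$ rooted at $r$, and $G$ the condensation graph of $D$ relative to $T$. Then $\chi_A(D)\le \chi(G)$.
   Context: Digraphs are finite and loopless; paths and cycles are directed; $l(\cdot)$ denotes length. Girth is the length of a shortest directed cycle. A DFS tree $T$ of a strongly connected digraph $D$ rooted at $r$ is the spanning out-branching produced by a depth-first search started at $r$. $P_u$ is the unique $ru$-path in $T$; the length $t$ of $T$ is the length of a longest path in $T$; the levels are $V_i=\{u: l(P_u)=i\}$, $0\le i\le t$. An arc $(u,v)$ is a backward arc if $T$ contains a $vu$-path. Let $k=\lceil\frac{t+1}{g-1}\rceil$ and $U_h=\bigcup_{j=0}^{g-2}V_{h(g-1)+j}$ for $h\in\{0,\ldots,k-1\}$, with $V_m=\emptyset$ for $m>t$. The condensation graph $G$ of $D$ relative to $T$ has vertex set $\{U_0,\ldots,U_{k-1}\}$, and for $i>j$, $U_iU_j$ is an edge iff there is a backward arc $(u,v)$ with $u\in U_i$ and $v\in U_j$. $\chi$ is the chromatic number; $\chi_A$ is the minimum number of colors in a vertex coloring whose color classes induce no directed cycle. *)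

(* Defs.v *)
From mathcomp Require Import all_boot.
Set Implicit Arguments. Unset Strict Implicit. Unset Printing Implicit Defensive.

Section Digraphs.
Variable V : finType.

(* A digraph on V is an arc relation e : rel V (finite; looplessness is a
   separate hypothesis [irreflexive e]). *)

Definition strongly_connected (e : rel V) : Prop := forall x y, connect e x y.

Definition dcycle (e : rel V) (c : seq V) : Prop :=
  [/\ c != [::], uniq c & cycle e c].

Definition is_girth (e : rel V) (g : nat) : Prop :=
  (exists2 c, dcycle e c & size c = g) /\
  (forall c, dcycle e c -> g <= size c).

(* Nondeterministic depth-first search.  [dfs_visit e u S S' A]: while
   visiting u with current visited set S, the search ends with visited set S'
   and produces the tree arcs A (in discovery order). *)
Inductive dfs_visit (e : rel V) : V -> {set V} -> {set V} -> seq (V * V) -> Prop :=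
| dfs_done u (S : {set V}) : (forall v, e u v -> v \in S) -> dfs_visit e u S S [::]
| dfs_step u v (S S1 S2 : {set V}) (A1 A2 : seq (V * V)) :
    e u v -> v \notin S ->
    dfs_visit e v (v |: S) S1 A1 ->
    dfs_visit e u S1 S2 A2 ->
    dfs_visit e u S S2 ((u, v) :: A1 ++ A2).

Definition dfs_tree (e : rel V) (r : V) (A : seq (V * V)) : Prop :=
  exists S, dfs_visit e r [set r] S A.

Definition tarc (A : seq (V * V)) : rel V := fun x y => (x, y) \in A.

Definition tdepth (A : seq (V * V)) (r u : V) (d : nat) : Prop :=
  exists p, [/\ path (tarc A) r p, last r p = u & size p = d].

Definition tree_length (A : seq (V * V)) (r : V) (t : nat) : Prop :=
  (exists u, tdepth A r u t) /\ (forall u d, tdepth A r u d -> d <= t).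

(* u \in U_h, where U_h is the union of the levels V_{h(g-1)},...,V_{h(g-1)+g-2}. *)
Definition inU (A : seq (V * V)) (r : V) (g : nat) (u : V) (h : nat) : Prop :=
  exists2 d, tdepth A r u d & d %/ (g - 1) = h.

Definition backward (e : rel V) (A : seq (V * V)) (u v : V) : Prop :=
  e u v /\ connect (tarc A) v u.

(* Acyclic colouring with n colours: no colour class contains (hence induces)
   a directed cycle. *)
Definition acyc_colorable (e : rel V) (n : nat) : Prop :=
  exists f : V -> 'I_n, forall c, dcycle e c -> exists x y, [/\ x \in c, y \in c & f x != f y].

Definition is_chiA (e : rel V) (n : nat) : Prop :=
  acyc_colorable e n /\ forall m, acyc_colorable e m -> n <= m.

End Digraphs.

Definition ceil_div (a b : nat) : nat := (a + b - 1) %/ b.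

Definition cond_k (g t : nat) : nat := ceil_div t.+1 (g - 1).

(* Adjacency of the condensation graph G on vertex set {U_0..U_{k-1}} = 'I_k:
   for i > j, U_i U_j is an edge iff there is a backward arc from U_i to U_j
   (made symmetric, as G is an undirected graph). *)
Definition cond_edge (V : finType) (e : rel V) (A : seq (V * V)) (r : V) (g : nat)
  (i j : nat) : Prop :=
  j < i /\ exists u v, [/\ backward e A u v, inU A r g u i & inU A r g v j].

Definition cond_adj (V : finType) (e : rel V) (A : seq (V * V)) (r : V) (g t : nat)
  (i j : 'I_(cond_k g t)) : Prop :=
  cond_edge e A r g i j \/ cond_edge e A r g j i.

Definition colorable (W : finType) (adj : W -> W -> Prop) (n : nat) : Prop :=
  exists f : W -> 'I_n, forall x y, adj x y -> f x != f y.

Definition is_chi (W : finType) (adj : W -> W -> Prop) (n : nat) : Prop :=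
  colorable adj n /\ forall m, colorable adj m -> n <= m.

Arguments cond_adj {V} e A r g t i j.

(* Main.v *)
Require Import Defs.
From mathcomp Require Import all_boot zify.
Set Implicit Arguments. Unset Strict Implicit.

Section Aux.
Variable V : finType.
Variable e : rel V.

Lemma path_exit (P : pred V) x p : path e x p -> P x -> has (predC P) p ->
  exists a b, [/\ e a b, a \in x :: p, b \in p, P a & ~~ P b].
Proof.
elim: p x => [|z p IH] x //= /andP[exz pz] Px /orP[Hz|Hp].
- by exists x, z; split; rewrite ?inE ?eqxx.
- case: (boolP (P z)) => Pz; last by exists x, z; split; rewrite ?inE ?eqxx.
  have [a [b [eab ain bin Pa Pb]]] := IH z pz Pz Hp.
  exists a, b; split => //; rewrite inE ?bin ?orbT //.
  by move: ain; rewrite inE => /orP[/eqP->|->]; rewrite ?inE ?eqxx ?orbT.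
Qed.

Lemma cycle_exit (P : pred V) c a b : cycle e c -> a \in c -> b \in c -> P a -> ~~ P b ->
  exists x y, [/\ e x y, x \in c, y \in c, P x & ~~ P y].
Proof.
move=> cc ac bc Pa Pb; case: (rot_to ac) => i s' Hrot.
have : cycle e (a :: s') by rewrite -Hrot rot_cycle.
rewrite /cycle => Hp.
have bs : b \in rcons s' a.
  by rewrite mem_rcons; rewrite -Hrot mem_rot.
have hb : has (predC P) (rcons s' a) by apply/hasP; exists b.
have [x [y [exy xin yin Px Py]]] := path_exit Hp Pa hb.
exists x, y; split => //.
- by rewrite -(mem_rot i) Hrot; move: xin; rewrite !inE mem_rcons inE => /orP[->|] //.
- by rewrite -(mem_rot i) Hrot -mem_rcons.
Qed.

Lemma tarc_sub (A B : seq (V * V)) : {subset A <= B} -> forall x y, connect (tarc A) x y -> connect (tarc B) x y.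
Proof.
move=> sAB x y; apply: connect_sub => a b Hab; apply: connect1; exact: sAB.
Qed.

Lemma dfs_inv u S S' A : dfs_visit e u S S' A ->
  [/\ S \subset S',
      (forall x y, (x \in S' :\: S) || (x == u) -> e x y -> y \in S'),
      (forall x, x \in S' :\: S -> connect (tarc A) u x),
      (forall a b, (a, b) \in A -> e a b /\ b \in S' :\: S) &
      uniq (map snd A)].
Proof.
elim=> {u S S' A} [u S Hn | u v S S1 S2 A1 A2 euv vS _ [s1 cl1 rc1 ar1 u1] _ [s2 cl2 rc2 ar2 u2]].
  split => //; first by move=> x y; rewrite setDv inE /= => /eqP -> /Hn.
  by move=> x; rewrite setDv inE.
have sS1 : S \subset S1 := subset_trans (subsetUr [set v] S) s1.
have vS1 : v \in S1 := subsetP s1 v (setU11 v S).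
have subA1 : {subset A1 <= (u, v) :: A1 ++ A2} by move=> z zi; rewrite inE mem_cat zi orbT.
have subA2 : {subset A2 <= (u, v) :: A1 ++ A2} by move=> z zi; rewrite inE mem_cat zi !orbT.
have Huv : tarc ((u, v) :: A1 ++ A2) u v by rewrite /tarc inE eqxx.
split.
- exact: subset_trans sS1 s2.
- move=> x y Hx exy.
  case: (boolP ((x \in S2 :\: S1) || (x == u))) => H2; first exact: cl2 H2 exy.
  have xS1 : (x \in S1 :\: (v |: S)) || (x == v).
    move: Hx H2; rewrite !inE; case: (x \in S1); case: (x \in S2); case: (x == v); case: (x \in S); case: (x == u) => //.
  exact: (subsetP s2 _ (cl1 _ _ xS1 exy)).
- move=> x; rewrite inE => /andP[xS xS2].
  case: (boolP (x \in S1)) => xS1.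
  + case: (eqVneq x v) => [->|xv]; first exact: connect1.
    apply: connect_trans (connect1 Huv) _; apply: tarc_sub subA1 _ _ _.
    by apply: rc1; rewrite !inE negb_or xv xS xS1.
  + by apply: tarc_sub subA2 _ _ _; apply: rc2; rewrite inE xS1 xS2.
- move=> a b; rewrite inE mem_cat => /orP[/eqP[-> ->]|/orP[H|H]].
  + by split => //; rewrite !inE vS (subsetP s2).
  + have [eab] := ar1 _ _ H; rewrite !inE => /andP[/norP[bv bS] bS1].
    by split => //; rewrite bS (subsetP s2).
  + have [eab] := ar2 _ _ H; rewrite !inE => /andP[bS1 bS2].
    split => //; rewrite bS2 andbT; apply: contra bS1; exact: (subsetP sS1).
- rewrite /= map_cat cat_uniq u1 u2 /=; apply/andP; split.
  + rewrite mem_cat negb_or; apply/andP; split.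
    * by apply/mapP => -[[a b] Hab /= Ev]; have [_] := ar1 _ _ Hab; rewrite -Ev !inE eqxx.
    * by apply/mapP => -[[a b] Hab /= Ev]; have [_] := ar2 _ _ Hab; rewrite -Ev !inE vS1.
  + rewrite andbT; apply/hasP => -[b /mapP[[a1 b1] H1 /= E1] /mapP[[a2 b2] H2' /= E2]].
    have [_] := ar2 _ _ H1; have [_] := ar1 _ _ H2'; rewrite -E1 -E2 !inE.
    by case: (b \in S1); rewrite ?andbF.
Qed.

Lemma dfs_cyc u S S' A : dfs_visit e u S S' A -> forall c, cycle e c -> c != [::] ->
  (forall x, x \in c -> (x \in S' :\: S) || (x == u)) ->
  exists x y, [/\ x \in c, y \in c, e x y & connect (tarc A) y x].
Proof.
elim=> {u S S' A} [u S Hn | u v S S1 S2 A1 A2 euv vS H1 IH1 H2 IH2] c cc cn Hc.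
  have Hu : forall x, x \in c -> x = u by move=> x /Hc; rewrite setDv inE => /eqP.
  move: cc cn Hc Hu; case: c => [//|a p]; rewrite /cycle; case: p => [|z p] /=.
    move=> /andP[eaa _] _ _ Hu; exists a, a; split; rewrite ?inE ?eqxx //.
  move=> /andP[eaz _] _ _ Hu; exists a, a; split; rewrite ?inE ?eqxx //.
  have ha := Hu a (mem_head _ _); have hz : z = u by apply: Hu; rewrite !inE eqxx orbT.
  by move: eaz; rewrite ha hz.
have Hall := dfs_step euv vS H1 H2.
have [_ _ rcA _ _] := dfs_inv Hall.
have [s1 cl1 rc1 ar1 u1] := dfs_inv H1.
have [s2 cl2 rc2 ar2 u2] := dfs_inv H2.
have sS1 : S \subset S1 := subset_trans (subsetUr [set v] S) s1.
have subA1 : {subset A1 <= (u, v) :: A1 ++ A2} by move=> z zi; rewrite inE mem_cat zi orbT.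
have subA2 : {subset A2 <= (u, v) :: A1 ++ A2} by move=> z zi; rewrite inE mem_cat zi !orbT.
pose P := fun x => x \in S1 :\: S.
case: (boolP (has P c)) => Hin.
- case: (boolP (all P c)) => Hal.
  + have [x [y [xc yc exy cxy]]] : exists x y, [/\ x \in c, y \in c, e x y & connect (tarc A1) y x].
      apply: IH1 => // x xc; move/allP: Hal => /(_ x xc); rewrite /P !inE.
      by case: (x \in S1); case: (x == v); case: (x \in S).
    by exists x, y; split => //; apply: tarc_sub subA1 _ _ cxy.
  + have [a ac Pa] := hasP Hin.
    have [b bc Pb] := allPn Hal.
    have [x [y [exy xc yc Px Py]]] := cycle_exit cc ac bc Pa Pb.
    have yS1 : y \in S1.
      apply: (cl1 x y) exy; move: Px; rewrite /P !inE.
      by case: (x \in S1); case: (x == v); case: (x \in S).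
    have yu : y = u.
      apply/eqP; move: (Hc y yc) Py; rewrite /P !inE yS1 /=.
      by case: (y \in S); case: (y == u); rewrite ?andbF.
    exists x, y; split => //; rewrite yu; apply: rcA.
    have [xS xS1] : x \notin S /\ x \in S1 by move: Px; rewrite /P inE => /andP[].
    by rewrite inE (subsetP s2 _ xS1) xS.
- have [x [y [xc yc exy cxy]]] : exists x y, [/\ x \in c, y \in c, e x y & connect (tarc A2) y x].
    apply: IH2 => // x xc; move: (Hc x xc); move/hasPn: Hin => /(_ x xc); rewrite /P !inE.
    by case: (x \in S1); case: (x \in S2); case: (x == u); case: (x \in S).
  by exists x, y; split => //; apply: tarc_sub subA2 _ _ cxy.
Qed.

Lemma path_root_uniq (R : rel V) r : (forall a, ~~ R a r) ->
  (forall a a' b, R a b -> R a' b -> a = a') ->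
  forall p1 p2, path R r p1 -> path R r p2 -> last r p1 = last r p2 -> p1 = p2.
Proof.
move=> Hr Hp p1; elim/last_ind: p1 => [|q1 z1 IH] p2; case/lastP: p2 => [|q2 z2] //.
- rewrite rcons_path last_rcons /= => _ /andP[_ H] E; by rewrite -E (negbTE (Hr _)) in H.
- rewrite rcons_path last_rcons /= => /andP[_ H] _ E; by rewrite E (negbTE (Hr _)) in H.
- rewrite !rcons_path !last_rcons => /andP[p1 h1] /andP[p2 h2] E; subst z2.
  by rewrite (IH q2 p1 p2 (Hp _ _ _ h1 h2)).
Qed.

Lemma snd_uniq (A : seq (V * V)) a a' b : uniq (map snd A) -> (a, b) \in A -> (a', b) \in A -> a = a'.
Proof.
elim: A => [//|z A IH] /= /andP[zn un]; rewrite !inE => /orP[/eqP E|H] /orP[/eqP E'|H'].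
- by move: E'; rewrite -E => -[].
- by move: zn; rewrite -E /=; move: (map_f snd H') => /= ->.
- by move: zn; rewrite -E' /=; move: (map_f snd H) => /= ->.
- exact: IH.
Qed.

Lemma path_closed (S : {set V}) r x p : (forall x y, (x \in S :\: [set r]) || (x == r) -> e x y -> y \in S) ->
  r \in S -> path e x p -> x \in S -> last x p \in S.
Proof.
move=> cl rS; elim: p x => [//|z p IH] x /= /andP[exz pz] xS; apply: IH => //.
apply: (cl x) exz; rewrite !inE xS andbT; by case: (x == r).
Qed.
End Aux.

From Stdlib Require IndefiniteDescription.

Theorem mainTheorem18 (V : finType) (e : rel V) (r : V) (A : seq (V * V)) (g t : nat) :
  irreflexive e ->
  strongly_connected e ->
  is_girth e g ->
  dfs_tree e r A ->
  tree_length A r t ->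
  forall chiA chiG : nat,
    is_chiA e chiA ->
    is_chi (cond_adj e A r g t) chiG ->
    chiA <= chiG.
Proof.
move=> irr sc [[c0 [c0n _ c0c] c0s] gmin] [S HS] [_ tmax] chiA chiG [_ Hmin] [[f Hf] _].
apply: Hmin.
have [s cl rc ar un] := dfs_inv HS.
have rS : r \in S by apply: (subsetP s); rewrite inE.
have allS : forall y, y \in S.
  move=> y; move: (sc r y) => /connectP[p pp ->]; exact: (path_closed cl rS pp rS).
have g2 : 1 < g.
  rewrite -c0s; move: c0n c0c; clear c0s; case: c0 => [//|a [|z p]] //= _.
  by rewrite andbT irr.
have Hex : forall y, exists d, tdepth A r y d.
  move=> y; case: (eqVneq y r) => [->|yr]; first by exists 0, [::].
  have /connectP[p pp ->] : connect (tarc A) r y by apply: rc; rewrite !inE yr allS.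
  by exists (size p), p.
have Runiq : forall p1 p2, path (tarc A) r p1 -> path (tarc A) r p2 -> last r p1 = last r p2 -> p1 = p2.
  apply: path_root_uniq.
  - move=> a; apply/negP => /ar [_]; by rewrite !inE eqxx.
  - move=> a a' b; exact: snd_uniq.
have Duniq : forall y d1 d2, tdepth A r y d1 -> tdepth A r y d2 -> d1 = d2.
  move=> y d1 d2 [p1 [h1 l1 s1]] [p2 [h2 l2 s2]].
  by rewrite -s1 -s2 (Runiq p1 p2) // l1 l2.
pose dep := fun y => proj1_sig (IndefiniteDescription.constructive_indefinite_description _ (Hex y)).
have depP : forall y, tdepth A r y (dep y) by move=> y; rewrite /dep; case: IndefiniteDescription.constructive_indefinite_description.
have b0 : 0 < g - 1 by rewrite subn_gt0.
have kE : cond_k g t = t %/ (g - 1) + 1.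
  rewrite /cond_k /ceil_div -divnDMl //; congr (_ %/ _); rewrite mul1n; lia.
have k0 : 0 < cond_k g t by rewrite kE addn1.
pose i0 : 'I_(cond_k g t) := Ordinal k0.
pose lev := fun y => insubd i0 (dep y %/ (g - 1)) : 'I_(cond_k g t).
have levE : forall y, val (lev y) = dep y %/ (g - 1).
  move=> y; rewrite /lev insubdK // -topredE /= kE addn1 ltnS.
  apply: leq_div2r; exact: tmax (depP y).
exists (fun y => f (lev y)) => c [cn cu cc].
have [x [y [xc yc exy cxy]]] := dfs_cyc HS cc cn (fun x _ => ltac:(rewrite !inE allS andbT; by case: (x == r))).
exists x, y; split => //; apply: Hf; left.
have [p pp xE] := connectP cxy.
case: (shortenP pp) xE => p' pp' up' _ xE.
have ep' : path e y p' by apply: sub_path pp' => a b /ar [].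
have dc : dcycle e (y :: p') by split => //; rewrite /cycle rcons_path ep' -xE exy.
have gle := gmin _ dc; rewrite /= in gle.
have [py [ppy lpy spy]] := depP y.
have dxE : dep x = dep y + size p'.
  apply: (Duniq x); first exact: depP.
  exists (py ++ p'); rewrite cat_path ppy lpy pp' last_cat lpy -xE size_cat spy; split => //.
split.
- have H : dep y + (g - 1) <= dep y + size p' by rewrite leq_add2l leq_subLR add1n.
  rewrite levE levE dxE; apply: leq_trans (leq_div2r _ H).
  by rewrite -{2}(mul1n (g - 1)) divnDMl // addn1.
- exists x, y; split.
  + by split.
  + by exists (dep x) => //; rewrite levE.
  + by exists (dep y) => //; rewrite levE.
Qed.
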